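(* Let $n$ be even, let $1\le m\le n/2$, and let $F,F'\colon\mathbb F_2^n\to\mathbb F_2^m$ be two $(n,m)$-bent functions. Then $F$ and $F'$ are extended-affine equivalent if and only if their addition designs $\mathbb D(F)$ and $\mathbb D(F')$ are isomorphic.
   Context: An $(n,m)$-function is a map $F\colon\mathbb F_2^n\to\mathbb F_2^m$. For $\mathbf b\in\mathbb F_2^m$ the component function is $F_{\mathbf b}(\mathbf x)=\langle \mathbf b,F(\mathbf x)\rangle_m$ (standard dot product), and the Walsh transform is $W_F(\mathbf a,\mathbf b)=\sum_{\mathbf x\in\mathbb F_2^n}(-1)^{F_{\mathbf b}(\mathbf x)\oplus\langle\mathbf a,\mathbf x\rangle_n}$. $F$ is bent if $W_F(\mathbf a,\mathbf b)=\pm 2^{n/2}$ for all $\mathbf a\in\mathbb F_2^n$ and all $\mathbf b\in\mathbb F_2^m\setminus\{\mathbf 0\}$. Two $(n,m)$-functions $F,F'$ are extended-affine (EA-) equivalent if $F=A_1\circ F'\circ A_2\oplus A_3$ for a linear permutation $A_1$ of $\mathbb F_2^m$, an affine permutation $A_2$ of $\mathbb F_2^n$ and an affine map $A_3\colon\mathbb F_2^n\to\mathbb F_2^m$. For an $(n,m)$-bent $F$, let $\mathcal C(F)\subseteq\mathbb F_2^{2^n}$ be the binary linear code spanned by the rows of the $(n+m+1)\times 2^n$ matrix whose column indexed by $\mathbf x\in\mathbb F_2^n$ is $(1,\mathbf x,F(\mathbf x))^T$ (coordinates indexed by $\mathbb F_2^n$). The addition design $\mathbb D(F)$ is the incidence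 structure with point set $\mathbb F_2^n$ and block set $\{\operatorname{supp}(c): c\in\mathcal C(F),\ \operatorname{wt}(c)=2^{n-1}-2^{n/2-1}\}$. Two incidence structures are isomorphic if there exist permutation matrices $P,Q$ with $M=P M' Q$ for their incidence matrices $M,M'$ (equivalently, a bijection of points inducing a bijection of blocks). *)

(* Defs.v *)
From HB Require Import structures.
From mathcomp Require Import all_boot all_order all_algebra all_fingroup.
Set Implicit Arguments. Unset Strict Implicit. Unset Printing Implicit Defensive.
Import GRing.Theory Num.Theory.
Local Open Scope ring_scope.

Notation vec n := 'rV['F_2]_n.

Definition dot (n : nat) (a b : vec n) : 'F_2 := \sum_(i < n) a 0 i * b 0 i.

Definition sgn (e : 'F_2) : int := if e == 0 then 1 else -1.

Definition walsh (n m : nat) (F : vec n -> vec m) (a : vec n) (b : vec m) : int :=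
  \sum_(x : vec n) sgn (dot b (F x) + dot a x).

Definition is_bent (n m : nat) (F : vec n -> vec m) : Prop :=
  forall (a : vec n) (b : vec m), b != 0 ->
    walsh F a b = (2 ^ n./2)%:Z \/ walsh F a b = - (2 ^ n./2)%:Z.

(* EA-equivalence: F = A1 o F' o A2 + A3 with A1 linear permutation of F_2^m
   (y |-> y *m L, L invertible), A2 affine permutation of F_2^n
   (x |-> x *m M + c, M invertible), A3 affine map F_2^n -> F_2^m
   (x |-> x *m N + d). *)
Definition EA_equiv (n m : nat) (F F' : vec n -> vec m) : Prop :=
  exists (L : 'M['F_2]_m) (M : 'M['F_2]_n) (c : vec n) (N : 'M['F_2]_(n, m)) (d : vec m),
    [/\ L \in unitmx, M \in unitmx &
        forall x : vec n, F x = F' (x *m M + c) *m L + (x *m N + d)].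

(* The code C(F): the row span of the matrix with columns (1, x, F(x))^T,
   i.e. all words x |-> l*1 + <u, x> + <v, F(x)> (coordinates indexed by F_2^n). *)
Definition codeword (n m : nat) (F : vec n -> vec m) (l : 'F_2) (u : vec n) (v : vec m)
  : {ffun vec n -> 'F_2} := [ffun x => l + dot u x + dot v (F x)].

Definition code (n m : nat) (F : vec n -> vec m) : {set {ffun vec n -> 'F_2}} :=
  [set codeword F luv.1.1 luv.1.2 luv.2 | luv : 'F_2 * vec n * vec m].

Definition supp (n : nat) (c : {ffun vec n -> 'F_2}) : {set vec n} := [set x | c x != 0].

Definition wt (n : nat) (c : {ffun vec n -> 'F_2}) : nat := #|supp c|.

Definition add_design (n m : nat) (F : vec n -> vec m) : {set {set vec n}} :=
  [set supp c | c in code F & wt c == (2 ^ n.-1 - 2 ^ (n./2).-1)%N].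

Definition design_iso (n : nat) (D D' : {set {set vec n}}) : Prop :=
  exists s : {perm vec n}, [set [set s x | x in B] | B : {set vec n} in D'] = D.

(* Main.v *)
Require Import Defs.
From HB Require Import structures.
From mathcomp Require Import all_boot all_order all_algebra all_fingroup.
From mathcomp Require Import zify ring.
Import GRing.Theory Num.Theory.
Local Open Scope ring_scope.


Lemma F2_cases (a : 'F_2) : a = 0 \/ a = 1.
Proof. case: a => [[|[|//]]] ? ; [left|right]; exact/val_inj. Qed.

Lemma F2_eq (a b : 'F_2) : (a != 0) = (b != 0) -> a = b.
Proof. by case: (F2_cases a) => ->; case: (F2_cases b) => ->. Qed.

Lemma sgnD (a b : 'F_2) : sgn (a + b) = sgn a * sgn b.
Proof. by case: (F2_cases a) => ->; case: (F2_cases b) => ->. Qed.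

Lemma sgn1D (a : 'F_2) : sgn (1 + a) = - sgn a.
Proof. by case: (F2_cases a) => ->. Qed.

Lemma sgn_sq (a : 'F_2) : sgn a * sgn a = 1.
Proof. by case: (F2_cases a) => ->. Qed.

Lemma dotE n (a b : vec n) : dot a b = (a *m b^T) 0 0.
Proof. by rewrite /dot !mxE; apply: eq_bigr => i _; rewrite !mxE. Qed.

Lemma dotC n (a b : vec n) : dot a b = dot b a.
Proof. by rewrite /dot; apply: eq_bigr => i _; rewrite mulrC. Qed.

Lemma dotDr n (a b c : vec n) : dot a (b + c) = dot a b + dot a c.
Proof. by rewrite !dotE linearD /= mulmxDr mxE. Qed.

Lemma dotDl n (a b c : vec n) : dot (a + b) c = dot a c + dot b c.
Proof. by rewrite !dotE mulmxDl mxE. Qed.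

Lemma dotNl n (a c : vec n) : dot (- a) c = - dot a c.
Proof. by rewrite !dotE mulNmx mxE. Qed.

Lemma dot0l n (c : vec n) : dot 0 c = 0.
Proof. by rewrite dotE mul0mx mxE. Qed.

Lemma dotM p q (a : vec p) (b : vec q) (K : 'M_(q, p)) :
  dot a (b *m K) = dot (a *m K^T) b.
Proof. by rewrite !dotE trmx_mul mulmxA. Qed.

Lemma dot_delta n (i : 'I_n) (x : vec n) : dot (delta_mx 0 i) x = x 0 i.
Proof.
rewrite /dot (bigD1 i) //= big1 ?addr0 => [|j ji]; first by rewrite mxE !eqxx mul1r.
by rewrite mxE (negbTE ji) andbF mul0r.
Qed.

Lemma card_vec n : #|{: vec n}| = (2 ^ n)%N.
Proof. by rewrite card_mx card_Fp // mul1n. Qed.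

Lemma sum_sgn_wt n (c : {ffun vec n -> 'F_2}) :
  \sum_(x : vec n) sgn (c x) = (2 ^ n)%:Z - 2 * (wt c)%:Z.
Proof.
rewrite (bigID (fun x => c x == 0)) /=.
rewrite (eq_bigr (fun _ => 1)); last by move=> x /eqP ->.
rewrite [X in _ + X](eq_bigr (fun _ => -1)); last by move=> x /negbTE; rewrite /sgn => ->.
rewrite !sumr_const -card_vec -(cardC (fun x => c x == 0)) /wt /supp.
have -> : #|[pred x | c x != 0]| = #|[set x | c x != 0]|.
  by apply: eq_card => x; rewrite !inE.
set b := #|[set x | c x != 0]|.
set a := #|(fun x : vec n => c x == 0)|.
rewrite mulNrn PoszD; lia.
Qed.

Lemma nz_row n (a : vec n) : a != 0 -> exists i, a 0 i = 1.
Proof.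
move=> ha; have [i ai] : exists i, a 0 i != 0.
  apply/existsP; apply: contraR ha => /existsPn H; apply/eqP/rowP => i.
  by rewrite mxE; apply/eqP/negbNE/H.
by exists i; case: (F2_cases (a 0 i)) ai => -> //; rewrite eqxx.
Qed.

Lemma sum_affine0 n (a : vec n) (b : 'F_2) : a != 0 ->
  \sum_(x : vec n) sgn (dot a x + b) = 0.
Proof.
move=> /nz_row [i ai].
set S := \sum_x _.
have : S = - S.
  rewrite {1}/S (reindex_inj (addIr (delta_mx 0 i))) /= -sumrN.
  apply: eq_bigr => x _; rewrite dotDr [dot a (delta_mx _ _)]dotC dot_delta ai -sgn1D; congr sgn.
  by rewrite [dot a x + 1]addrC addrA.
lia.
Qed.

Lemma sum_const n (b : 'F_2) :
  \sum_(x : vec n) sgn b = sgn b * (2 ^ n)%N%:Z.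
Proof. by rewrite sumr_const card_vec -mulr_natr natz. Qed.

Lemma sum_cw n m (F : vec n -> vec m) l u v :
  \sum_(x : vec n) sgn (codeword F l u v x) = sgn l * walsh F u v.
Proof.
rewrite /walsh mulr_sumr; apply: eq_bigr => x _.
by rewrite ffunE -addrA (addrC (dot u x)) (sgnD l).
Qed.

Lemma mem_design n m (F : vec n -> vec m) B :
  B \in add_design F <-> exists l u v, B = supp (codeword F l u v) /\
        wt (codeword F l u v) = (2 ^ n.-1 - 2 ^ (n./2).-1)%N.
Proof.
split.
  case/imsetP => c; rewrite inE => /andP[/imsetP[[[l u] v] _ ->] /eqP hw] ->.
  by exists l, u, v.
case=> l [u [v [-> hw]]]; apply/imsetP; exists (codeword F l u v) => //.
rewrite inE hw eqxx andbT; apply/imsetP; by exists (l, u, v).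
Qed.

Lemma exp2_double k : (2 ^ k.*2 = 2 ^ k * 2 ^ k)%N.
Proof. by rewrite -addnn expnD. Qed.

Lemma block_exists n m (F : vec n -> vec m) k u v :
  n = k.*2 -> (0 < k)%N -> is_bent F -> v != 0 ->
  exists l, supp (codeword F l u v) \in add_design F.
Proof.
move=> hn hk hb hv.
have [l hl] : exists l, \sum_(x : vec n) sgn (codeword F l u v x) = (2 ^ k)%N%:Z.
  case: (hb u v hv) => hw; [exists 0 | exists 1]; rewrite sum_cw hw hn doubleK;
  by rewrite /sgn ?eqxx ?oner_eq0 ?mul1r ?mulN1r ?opprK.
exists l; apply/mem_design; exists l, u, v; split => //.
move: hl; rewrite sum_sgn_wt; move: (wt _) => w; rewrite hn doubleK.
case: k hk hn => // k _ hn.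
rewrite doubleS /= !expnS !exp2_double; set a := (2 ^ k)%N; nia.
Qed.


Lemma dotBr n (a b c : vec n) : dot a (b - c) = dot a b - dot a c.
Proof. by rewrite /dot -sumrB; apply: eq_bigr => i _; rewrite !mxE mulrBr. Qed.

Lemma supp_comp n (p : {perm vec n}) (g : {ffun vec n -> 'F_2}) :
  (p^-1)%g @: supp g = supp [ffun x => g (p x)].
Proof.
apply/setP => x; rewrite [in RHS]inE ffunE.
by rewrite -{1}(permK p x) mem_imset ?inE //; apply: perm_inj.
Qed.

Lemma card_supp_comp n (p : {perm vec n}) (g : {ffun vec n -> 'F_2}) :
  wt [ffun x => g (p x)] = wt g.
Proof. by rewrite /wt -supp_comp card_imset //; apply: perm_inj. Qed.

Section Forward.
Variables (n m : nat) (F F' : vec n -> vec m).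
Variables (L : 'M['F_2]_m) (M : 'M['F_2]_n) (c : vec n) (N : 'M['F_2]_(n, m)) (d : vec m).
Hypotheses (hL : L \in unitmx) (hM : M \in unitmx).
Hypothesis hF : forall x : vec n, F x = F' (x *m M + c) *m L + (x *m N + d).

Lemma T1 l u v : exists l' u' v', forall x,
  codeword F l u v x = codeword F' l' u' v' (x *m M + c).
Proof.
set u' := (u + v *m N^T) *m (invmx M)^T.
exists (l + dot v d - dot u' c), u', (v *m L^T) => x.
rewrite !ffunE hF !dotDr !dotM.
have -> : u' *m M^T = u + v *m N^T.
  by rewrite /u' -mulmxA -trmx_mul mulmxV // trmx1 mulmx1.
rewrite dotDl; ring.
Qed.

Lemma T2 l u v : exists l' u' v', forall x,
  codeword F' l u v (x *m M + c) = codeword F l' u' v' x.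
Proof.
set v' := v *m (invmx L)^T.
exists (l + dot u c - dot v' d), (u *m M^T - v' *m N^T), v' => x.
rewrite !ffunE.
have -> : F' (x *m M + c) = (F x - (x *m N + d)) *m invmx L.
  by rewrite hF addrK mulmxK.
rewrite !dotDr !dotM -/v' dotBr dotDr dotM dotDl dotNl; ring.
Qed.

Lemma A_inj : injective (fun x : vec n => x *m M + c).
Proof.
move=> x y /= /addIr h.
by rewrite -(mulmxK hM x) h mulmxK.
Qed.

Lemma forward : design_iso (add_design F) (add_design F').
Proof.
set Ap := perm A_inj.
exists (Ap^-1)%g; apply/setP => B; apply/imsetP/idP.
  case=> B' /mem_design [l [u [v [-> hw]]]] ->.
  have [l' [u' [v' h]]] := T2 l u v.
  have hE : [ffun x => codeword F' l u v (Ap x)] = codeword F l' u' v'.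
    by apply/ffunP => x; rewrite ffunE permE h.
  rewrite supp_comp hE; apply/mem_design; exists l', u', v'.
  by split => //; rewrite -hw -(@card_supp_comp _ Ap (codeword F' l u v)) hE.
case/mem_design => l [u [v [-> hw]]].
have [l' [u' [v' h]]] := T1 l u v.
have hE : [ffun x => codeword F' l' u' v' (Ap x)] = codeword F l u v.
  by apply/ffunP => x; rewrite ffunE permE h.
exists (supp (codeword F' l' u' v')).
  apply/mem_design; exists l', u', v'; split => //.
  by rewrite -(@card_supp_comp _ Ap (codeword F' l' u' v')) hE.
by rewrite supp_comp hE.
Qed.

End Forward.


Lemma F2_add_self (a : 'F_2) : a + a = 0.
Proof. by case: (F2_cases a) => ->; apply/eqP. Qed.

Lemma delta_neq0 n (i : 'I_n) : delta_mx 0 i != 0 :> vec n.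
Proof.
apply/eqP => /rowP /(_ i); rewrite !mxE !eqxx /= => /eqP.
by rewrite oner_eq0.
Qed.

Lemma cw_add n m (F : vec n -> vec m) a1 u1 v1 a2 u2 v2 y :
  codeword F a1 u1 v1 y + codeword F a2 u2 v2 y =
  codeword F (a1 + a2) (u1 + u2) (v1 + v2) y.
Proof. rewrite !ffunE !dotDl; ring. Qed.

Lemma transfer n (s : {perm vec n}) (g g' : {ffun vec n -> 'F_2}) :
  [set s x | x in supp g'] = supp g -> forall x, g (s x) = g' x.
Proof.
move=> h x; apply: F2_eq.
have : (s x \in supp g) = (x \in supp g').
  by rewrite -h mem_imset //; apply: perm_inj.
by rewrite !inE.
Qed.

Lemma walsh_nz n m (F : vec n -> vec m) k u v :
  n = k.*2 -> is_bent F -> v != 0 ->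
  walsh F u v = (2 ^ k)%N%:Z \/ walsh F u v = - (2 ^ k)%N%:Z.
Proof. by move=> hn hb hv; rewrite -(doubleK k) -hn; apply: hb. Qed.

Section Backward.
Variables (n m k : nat) (F F' : vec n -> vec m).
Hypotheses (hn : n = k.*2) (hk : (0 < k)%N) (hm : (0 < m)%N).
Hypotheses (hb : is_bent F) (hb' : is_bent F').
Variable s : {perm vec n}.
Hypothesis hs : [set [set s x | x in B] | B : {set vec n} in add_design F'] = add_design F.

Lemma simg B : B \in add_design F' -> [set s x | x in B] \in add_design F.
Proof. by move=> hB; rewrite -hs; apply/imsetP; exists B. Qed.

Lemma stepA (i : 'I_n) : exists ul : vec n * 'F_2,
  forall x : vec n, x 0 i = dot ul.1 (s x) + ul.2.
Proof.
set v0 : vec m := delta_mx 0 (Ordinal hm).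
have hv0 : v0 != 0 by apply: delta_neq0.
have [l1 h1] := @block_exists _ _ F' k 0 v0 hn hk hb' hv0.
have [l2 h2] := @block_exists _ _ F' k (delta_mx 0 i) v0 hn hk hb' hv0.
have /mem_design [a1 [u1 [v1 [e1 _]]]] := simg _ h1.
have /mem_design [a2 [u2 [v2 [e2 _]]]] := simg _ h2.
have t1 := @transfer _ _ _ _ e1; have t2 := @transfer _ _ _ _ e2.
have key : forall x : vec n, codeword F (a1 + a2) (u1 + u2) (v1 + v2) (s x) = l1 + l2 + x 0 i.
  move=> x; rewrite -cw_add t1 t2 !ffunE dot0l dot_delta.
  set t := dot v0 (F' x).
  transitivity (l1 + l2 + x 0 i + (t + t)); first ring.
  by rewrite F2_add_self addr0.
have hv : v1 + v2 = 0.
  apply/eqP; apply: contraT => hv.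
  have := @sum_cw _ _ F (a1 + a2) (u1 + u2) (v1 + v2).
  rewrite (reindex_inj (@perm_inj _ s)) /=.
  under eq_bigr do rewrite key -dot_delta addrC.
  rewrite sum_affine0 ?delta_neq0 //.
  have hpos : (0 < 2 ^ k)%N by rewrite expn_gt0.
  case: (@walsh_nz _ _ F k (u1 + u2) _ hn hb hv) => ->; case: (F2_cases (a1 + a2)) => ->;
  rewrite /sgn ?eqxx ?oner_eq0 /= => hh; exfalso; lia.
exists (u1 + u2, a1 + a2 - (l1 + l2)) => x /=.
have := key x; rewrite ffunE hv dot0l addr0 => h.
apply: (addrI (l1 + l2)); rewrite addrA -h; ring.
Qed.

Lemma stepB : exists (M : 'M['F_2]_n) (c0 : vec n),
  M \in unitmx /\ forall y, (s^-1)%g y = y *m M + c0.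
Proof.
have [f hf] := fin_all_exists stepA.
set M : 'M['F_2]_n := \matrix_(j, i) (f i).1 0 j.
set c0 : vec n := \row_i (f i).2.
have hA : forall y, (s^-1)%g y = y *m M + c0.
  move=> y; apply/rowP => i; rewrite hf permKV !mxE dotC /dot.
  by congr (_ + _); apply: eq_bigr => j _; rewrite !mxE.
exists M, c0; split => //.
rewrite unitmxE unitfE; apply/negP => /det0P [z hz hzM].
have : (s^-1)%g z = (s^-1)%g 0 by rewrite !hA hzM mul0mx.
by move/perm_inj => /eqP; rewrite (negbTE hz).
Qed.

Lemma stepD (M : 'M['F_2]_n) (c0 : vec n) :
  (forall y, (s^-1)%g y = y *m M + c0) ->
  forall j : 'I_m, exists q : 'F_2 * vec n * vec m, forall y : vec n,
    F' (y *m M + c0) 0 j = q.1.1 + dot q.1.2 y + dot q.2 (F y).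
Proof.
move=> hA j.
have hv : delta_mx 0 j != 0 :> vec m by apply: delta_neq0.
have [e he] := @block_exists _ _ F' k 0 _ hn hk hb' hv.
have /mem_design [a [u [w [ew _]]]] := simg _ he.
have t := @transfer _ _ _ _ ew.
exists (a - e, u, w) => y /=.
have := t ((s^-1)%g y); rewrite permKV !ffunE dot0l addr0 dot_delta hA => h.
by apply: (addrI e); rewrite -h; ring.
Qed.


Lemma backward : EA_equiv F F'.
Proof.
have [M [c0 [hM hA]]] := stepB.
have [g hg] := fin_all_exists (stepD _ _ hA).
set W : 'M['F_2]_m := \matrix_(i, j) (g j).2 0 i.
set U : 'M['F_2]_(n, m) := \matrix_(i, j) (g j).1.2 0 i.
set l0 : vec m := \row_j (g j).1.1.
have hG : forall y, F' (y *m M + c0) = F y *m W + y *m U + l0.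
  move=> y; apply/rowP => j; rewrite hg !mxE.
  have e1 : \sum_i F y 0 i * W i j = dot (F y) (g j).2.
    by apply: eq_bigr => i _; rewrite !mxE.
  have e2 : \sum_i y 0 i * U i j = dot y (g j).1.2.
    by apply: eq_bigr => i _; rewrite !mxE.
  rewrite e1 e2 (@dotC _ (F y)) (@dotC _ y); ring.
have hW : W \in unitmx.
  rewrite unitmxE unitfE -det_tr; apply/negP => /det0P [z hz hzW].
  have e : forall y, dot z (F' (y *m M + c0)) = dot (z *m U^T) y + dot z l0.
    by move=> y; rewrite hG !dotDr !dotM hzW dot0l add0r.
  have h1 : \sum_y sgn (dot z (F' (y *m M + c0))) = walsh F' 0 z.
    rewrite /walsh [in RHS](reindex_inj (@perm_inj _ (s^-1)%g)) /=.
    by apply: eq_bigr => y _; rewrite dot0l addr0 hA.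
  have h2 : \sum_y sgn (dot z (F' (y *m M + c0))) =
            \sum_y sgn (dot (z *m U^T) y + dot z l0).
    by apply: eq_bigr => y _; rewrite e.
  have hpos : (0 < 2 ^ k)%N by rewrite expn_gt0.
  have hk2 : (1 < 2 ^ k)%N by rewrite -{1}(expn0 2) ltn_exp2l.
  have hw := @walsh_nz _ _ F' k 0 z hn hb' hz.
  case: (eqVneq (z *m U^T) 0) => hzU.
    have h3 : \sum_(y : vec n) sgn (dot (z *m U^T) y + dot z l0) = \sum_(y : vec n) sgn (dot z l0).
      by apply: eq_bigr => y _; rewrite hzU dot0l add0r.
    move: h2; rewrite h3 sum_const h1.
    case: hw => ->; rewrite hn exp2_double; case: (F2_cases (dot z l0)) => ->;
    rewrite /sgn ?eqxx ?oner_eq0 /= => hh; exfalso; nia.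
  move: h2; rewrite sum_affine0 // h1.
  by case: hw => -> hh; exfalso; lia.
exists (invmx W), M, c0, (- (U *m invmx W)), (- (l0 *m invmx W)).
split; [by rewrite unitmx_inv | exact: hM | move=> x].
rewrite hG !mulmxDl mulmxK // -mulmxA !mulmxN.
set p := x *m _; set q := l0 *m _.
by rewrite -opprD -[F x + p + q]addrA addrK.
Qed.

End Backward.

Theorem theorem1 (n m : nat) (F F' : vec n -> vec m) :
  ~~ odd n -> (1 <= m)%N -> (m <= n./2)%N ->
  is_bent F -> is_bent F' ->
  (EA_equiv F F' <-> design_iso (add_design F) (add_design F')).
Proof.
move=> hodd hm1 hmk hF hF'.
set k := n./2.
have hn : n = k.*2 by rewrite -[n in LHS]odd_double_half (negbTE hodd) add0n.
have hk : (0 < k)%N by apply: leq_trans hm1 hmk.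
split.
  case=> L [M [c [N [d [hL hM hEA]]]]].
  exact: (@forward _ _ _ _ _ _ _ _ _ hL hM hEA).
case=> s hs.
exact: (@backward n m k F F' hn hk hm1 hF hF' s hs).
Qed.
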